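(* Let $f\in\mathcal{H}_{\rm fin}$ be not identically $0$, satisfying the geometric assumptions, and of level $N$. If $y\in\mathbb{Q}_+$ controls the support of $f$, then $yN\in\mathbb{N}$ and $N/y\in\mathbb{N}$.
   Context: $\mathcal{H}_{\rm fin}$ is the space of locally constant functions on $\mathrm{GL}_2(\mathbb{A}_{\rm fin})$ invariant under and compactly supported modulo the center $Z=Z(\mathbb{A}_{\rm fin})$. $K=\mathrm{GL}_2(\widehat{\mathbb{Z}})$, $K(N)$ the principal congruence subgroup of level $N$, and the level of $f$ is the minimal $N$ with $f$ bi-$K(N)$-invariant. $a(y)=\mathrm{diag}(y,1)$. Geometric assumptions: (i) $f$ is bi-$A(\widehat{\mathbb{Z}})$-invariant where $A(\widehat{\mathbb{Z}})=\{a(u):u\in\widehat{\mathbb{Z}}^\times\}$; (ii) $\mathrm{supp}\, f\subseteq a(y)^{-1}ZKa(y)$ for some $y\in\mathbb{Q}_+$, and any such $y$ is said to control the support of $f$. *)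

(* Defs.v *)
From HB Require Import structures.
From mathcomp Require Import all_boot all_order all_algebra.
From mathcomp Require Import complex.
From mathcomp Require Import Rstruct.
Set Implicit Arguments. Unset Strict Implicit. Unset Printing Implicit Defensive.
Import Order.TTheory GRing.Theory Num.Theory.
Local Open Scope ring_scope.

(* A_fin = lim_n A_fin / n Zhat = lim_n Q / nZ.
   An adele x is represented canonically by the family (x_n)_{n>=1},
   x_n in [0,n) the representative of x mod n Zhat (a rational);
   index 0 is unused and set to 0. *)
Definition rawA := nat -> rat.

Definition modq (r : rat) (n : nat) : rat :=
  if n == 0%N then 0 else r - n%:R * (Num.floor (r / n%:R))%:~R.

Definition isInt (r : rat) : Prop := denq r = 1.

Definition validA (x : rawA) : Prop :=
  x 0%N = 0 /\
  (forall n, (0 < n)%N -> 0 <= x n /\ x n < n%:R) /\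
  (forall n m, (0 < n)%N -> (0 < m)%N -> (n %| m)%N -> isInt ((x m - x n) / n%:R)).

Definition ratA (q : rat) : rawA := fun n => modq q n.
Definition azero : rawA := ratA 0.
Definition aone : rawA := ratA 1.
Definition aadd (x y : rawA) : rawA := fun n => modq (x n + y n) n.
Definition aneg (x : rawA) : rawA := fun n => modq (- x n) n.
Definition asub (x y : rawA) : rawA := aadd x (aneg y).
(* product: x*y mod n is computed from x, y mod nD, D = den(x_1) den(y_1) *)
Definition amul (x y : rawA) : rawA := fun n =>
  let D := (absz (denq (x 1%N)) * absz (denq (y 1%N)))%N in
  modq (x (n * D)%N * y (n * D)%N) n.

(* Zhat = { x : x mod Zhat = 0 };  N Zhat = { x : x mod N Zhat = 0 } *)
Definition inZhat (x : rawA) : Prop := validA x /\ x 1%N = 0.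
Definition inNZhat (N : nat) (x : rawA) : Prop := validA x /\ x N = 0.
Definition unitA (x : rawA) : Prop :=
  validA x /\ exists w, validA w /\ amul x w = aone /\ amul w x = aone.
Definition unitZhat (x : rawA) : Prop :=
  inZhat x /\ exists w, inZhat w /\ amul x w = aone /\ amul w x = aone.

Record M2 := mkM2 { e11 : rawA; e12 : rawA; e21 : rawA; e22 : rawA }.

Definition mmul (g h : M2) : M2 :=
  mkM2 (aadd (amul (e11 g) (e11 h)) (amul (e12 g) (e21 h)))
       (aadd (amul (e11 g) (e12 h)) (amul (e12 g) (e22 h)))
       (aadd (amul (e21 g) (e11 h)) (amul (e22 g) (e21 h)))
       (aadd (amul (e21 g) (e12 h)) (amul (e22 g) (e22 h))).
Definition mone : M2 := mkM2 aone azero azero aone.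
Definition entries_in (P : rawA -> Prop) (g : M2) : Prop :=
  P (e11 g) /\ P (e12 g) /\ P (e21 g) /\ P (e22 g).

Definition inG (g : M2) : Prop :=
  entries_in validA g /\
  exists h, entries_in validA h /\ mmul g h = mone /\ mmul h g = mone.

Definition inK (k : M2) : Prop :=
  entries_in inZhat k /\
  exists h, entries_in inZhat h /\ mmul k h = mone /\ mmul h k = mone.

Definition inKN (N : nat) (k : M2) : Prop :=
  inK k /\
  inNZhat N (asub (e11 k) aone) /\ inNZhat N (e12 k) /\
  inNZhat N (e21 k) /\ inNZhat N (asub (e22 k) aone).

Definition inZ (z : M2) : Prop :=
  exists t, unitA t /\ z = mkM2 t azero azero t.

Definition inAZhat (g : M2) : Prop :=
  exists u, unitZhat u /\ g = mkM2 u azero azero aone.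

Definition a_ (y : rat) : M2 := mkM2 (ratA y) azero azero aone.

Definition CC := (Rdefinitions.R)[i].
Definition fnG := M2 -> CC.

Definition Z_invariant (f : fnG) : Prop :=
  forall z g, inZ z -> inG g -> f (mmul z g) = f g.

(* locally constant: constant on a neighbourhood g K(M) of each g
   (the g K(M), M >= 1, form a neighbourhood basis of g) *)
Definition locally_constant (f : fnG) : Prop :=
  forall g, inG g -> exists M : nat, (0 < M)%N /\
    forall k, inKN M k -> f (mmul g k) = f g.

(* compactly supported modulo Z: the support is contained in a finite
   union of the sets g_i Z K (whose images are a basis of compact
   neighbourhoods in G/Z) *)
Definition compact_support_modZ (f : fnG) : Prop :=
  exists gs : seq M2, (forall h, List.In h gs -> inG h) /\
    forall g, inG g -> f g <> 0 ->
      exists h z k, List.In h gs /\ inZ z /\ inK k /\ g = mmul (mmul h z) k.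

Definition in_Hfin (f : fnG) : Prop :=
  Z_invariant f /\ locally_constant f /\ compact_support_modZ f.

Definition not_identically_zero (f : fnG) : Prop :=
  exists g, inG g /\ f g <> 0.

Definition bi_invariant (P : M2 -> Prop) (f : fnG) : Prop :=
  forall k1 g k2, P k1 -> inG g -> P k2 -> f (mmul (mmul k1 g) k2) = f g.

Definition level (f : fnG) (N : nat) : Prop :=
  (0 < N)%N /\ bi_invariant (inKN N) f /\
  forall M : nat, (0 < M)%N -> bi_invariant (inKN M) f -> (N <= M)%N.

Definition controls_support (f : fnG) (y : rat) : Prop :=
  0 < y /\
  forall g, inG g -> f g <> 0 ->
    exists z k, inZ z /\ inK k /\ g = mmul (mmul (mmul (a_ y^-1) z) k) (a_ y).

Definition geometric_assumptions (f : fnG) : Prop :=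
  bi_invariant inAZhat f /\ exists y : rat, controls_support f y.

(* Main.v *)
Require Import Defs.
From Stdlib Require Import Ring.
Ltac sring := ring.
Ltac sringW H := ring [H].
From mathcomp Require Import all_boot all_order all_algebra.
From mathcomp Require Import complex Rstruct.
From mathcomp Require Import ring lra zify.
From Stdlib Require Import FunctionalExtensionality ProofIrrelevance.
Set Implicit Arguments. Unset Strict Implicit. Unset Printing Implicit Defensive.
Import Order.TTheory GRing.Theory Num.Theory.
Local Open Scope ring_scope.

Lemma isIntE r : isInt r <-> r \is a Num.int.
Proof. by rewrite /isInt Qint_def; split => [->|/eqP]. Qed.

Definition cg (n : nat) (r s : rat) := (r - s) / n%:R \is a Num.int.

Section Cg.
Variable n : nat.
Hypothesis n0 : (0 < n)%N.
Let nR : n%:R != 0 :> rat. Proof. by rewrite pnatr_eq0 -lt0n. Qed.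

Lemma cg_refl r : cg n r r.
Proof. by rewrite /cg subrr mul0r. Qed.
Lemma cg_sym r s : cg n r s -> cg n s r.
Proof. by rewrite /cg -opprB mulNr rpredN. Qed.
Lemma cg_trans r s t : cg n r s -> cg n s t -> cg n r t.
Proof.
rewrite /cg => h1 h2; have := rpredD h1 h2.
by rewrite -mulrDl addrA subrK.
Qed.
Lemma cg_add r s r' s' : cg n r s -> cg n r' s' -> cg n (r + r') (s + s').
Proof.
rewrite /cg => h1 h2; have := rpredD h1 h2.
by rewrite -mulrDl opprD addrACA.
Qed.
Lemma cg_opp r s : cg n r s -> cg n (- r) (- s).
Proof. by rewrite /cg -opprD mulNr rpredN. Qed.
Lemma cg_multiple r k : k \is a Num.int -> cg n r (r + n%:R * k).
Proof.
move=> hk; rewrite /cg opprD addrA subrr add0r mulNr rpredN mulrC mulKf //.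
Qed.
Lemma cg_intE r s : cg n r s -> exists2 k, k \is a Num.int & r = s + n%:R * k.
Proof.
move=> h; exists ((r - s) / n%:R) => //.
by rewrite mulrC mulfVK // addrC subrK.
Qed.

Lemma modq_cg r : cg n r (modq r n).
Proof.
rewrite /modq; have -> : (n == 0%N) = false by case: (n) n0.
rewrite /cg opprB addrC subrK mulrC mulKf //.
Qed.

Lemma modq_range r : 0 <= modq r n /\ modq r n < n%:R.
Proof.
rewrite /modq; have -> : (n == 0%N) = false by case: (n) n0.
have np : 0 < n%:R :> rat by rewrite ltr0n.
have := floor_itv (r / n%:R); move=> /andP[h1 h2].
set q := r / n%:R in h1 h2 *.
have hr : r = n%:R * q by rewrite /q mulrC mulfVK.
rewrite {1}hr.
set k : rat := (Num.floor q)%:~R in h1 h2 *.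
rewrite rmorphD /= in h2.
split; first by rewrite subr_ge0 ler_pM2l.
have : n%:R * (q - k) < n%:R * 1 by rewrite ltr_pM2l // ltrBlDl.
by rewrite mulrBr mulr1 -hr.
Qed.

Lemma modq_eq r s : 0 <= s -> s < n%:R -> cg n r s -> modq r n = s.
Proof.
move=> s0 s1 /cg_intE [k kI ->].
rewrite /modq; have -> : (n == 0%N) = false by case: (n) n0.
have np : 0 < n%:R :> rat by rewrite ltr0n.
have -> : (s + n%:R * k) / n%:R = s / n%:R + k by rewrite mulrDl [n%:R * k]mulrC mulfK.
rewrite floorDrz //.
have -> : Num.floor (s / n%:R) = 0.
  apply: floor_def; rewrite add0r /= ?mulr0z ?mulr1z.
  by rewrite divr_ge0 ?ler0n //= ltr_pdivrMr // mul1r.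
by rewrite add0r floorK // mulrC addrK.
Qed.

Lemma modq_id s : 0 <= s -> s < n%:R -> modq s n = s.
Proof. by move=> h1 h2; apply: modq_eq => //; apply: cg_refl. Qed.

Lemma modq_congr r s : cg n r s -> modq r n = modq s n.
Proof.
move=> h; have [h1 h2] := modq_range s; apply: modq_eq => //.
exact: cg_trans h (modq_cg s).
Qed.

End Cg.

Lemma cg_dvd n m r s : (0 < m)%N -> (n %| m)%N -> cg m r s -> cg n r s.
Proof.
move=> m0 /dvdnP [q qe]; move: m0; rewrite qe /cg natrM muln_gt0 => /andP[q0 n0] h.
have nR : n%:R != 0 :> rat by rewrite pnatr_eq0 -lt0n.
have qR : q%:R != 0 :> rat by rewrite pnatr_eq0 -lt0n.
have -> : (r - s) / n%:R = ((r - s) / (q%:R * n%:R)) * q%:R.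
  by rewrite invfM mulrA mulrAC mulfVK.
by apply: rpredM => //; apply: rpred_nat.
Qed.

Lemma cg_mul n M a a' b e : (0 < M)%N -> (n * e %| M)%N ->
  e%:R * b \is a Num.int -> cg M a a' -> cg n (a * b) (a' * b).
Proof.
move=> M0 /dvdnP [q qe] eb; move: M0; rewrite qe !muln_gt0 => /andP[q0 /andP[n0 e0]].
rewrite /cg => h.
have nR : n%:R != 0 :> rat by rewrite pnatr_eq0 -lt0n.
have qR : q%:R != 0 :> rat by rewrite pnatr_eq0 -lt0n.
have eR : e%:R != 0 :> rat by rewrite pnatr_eq0 -lt0n.
have -> : (a * b - a' * b) / n%:R = ((a - a') / (q * (n * e))%:R) * q%:R * (e%:R * b).
  rewrite !natrM; field. by rewrite nR qR eR.
by rewrite rpredM ?rpred_nat // rpredM ?rpred_nat.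
Qed.

Lemma den_bound (r : rat) : (absz (denq r))%:R * r \is a Num.int.
Proof.
rewrite natr_absz gtr0_norm ?denq_gt0 // mulrC -numqE. exact: rpred_int.
Qed.

Lemma den_pos (r : rat) : (0 < absz (denq r))%N.
Proof. by rewrite absz_gt0 denq_neq0. Qed.

Definition bnd (e : nat) (x : rawA) := (0 < e)%N /\ forall k, e%:R * x k \is a Num.int.

Lemma valid_cg x n m : validA x -> (0 < n)%N -> (0 < m)%N -> (n %| m)%N ->
  cg n (x m) (x n).
Proof. by move=> [_ [_ h]] n0 m0 nm; apply/isIntE; apply: h. Qed.

Lemma valid_modq x n m : validA x -> (0 < n)%N -> (0 < m)%N -> (n %| m)%N ->
  x n = modq (x m) n.
Proof.
move=> vx n0 m0 nm; have [_ [hr _]] := vx; have [h1 h2] := hr n n0.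
by rewrite (modq_eq n0 h1 h2 (valid_cg vx n0 m0 nm)).
Qed.

Lemma valid_bnd x : validA x -> bnd (absz (denq (x 1%N))) x.
Proof.
move=> vx; split; first exact: den_pos.
case=> [|k]; first by have [-> _] := vx; rewrite mulr0.
have [j jI ->] := @cg_intE 1 isT _ _ (valid_cg vx (isT : (0 < 1)%N) (isT : (0 < k.+1)%N) (dvd1n _)).
by rewrite mul1r mulrDr rpredD ?den_bound // rpredM ?rpred_nat.
Qed.

Lemma amul_indep x y ex ey n M L : validA x -> validA y -> bnd ex x -> bnd ey y ->
  (0 < n)%N -> (0 < M)%N -> (0 < L)%N -> (M %| L)%N -> (n * ex * ey %| M)%N ->
  cg n (x L * y L) (x M * y M).
Proof.
move=> vx vy [ex0 bx] [ey0 bY] n0 M0 L0 ML nM.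
apply: (@cg_trans n _ (x M * y L)).
  apply: (@cg_mul n M _ _ _ ey) => //.
    apply: dvdn_trans nM; rewrite -mulnA; apply: dvdn_mul => //.
    exact: dvdn_mull.
  exact: valid_cg.
rewrite ![x M * _]mulrC.
apply: (@cg_mul n M _ _ _ ex) => //.
  apply: dvdn_trans nM; apply: dvdn_mulr => //.
exact: valid_cg.
Qed.

Lemma amul_gen x y ex ey n M : validA x -> validA y -> bnd ex x -> bnd ey y ->
  (0 < n)%N -> (0 < M)%N -> (n * ex * ey %| M)%N ->
  amul x y n = modq (x M * y M) n.
Proof.
move=> vx vy bx bY n0 M0 nM.
rewrite /amul /=; set D := (absz (denq (x 1%N)) * absz (denq (y 1%N)))%N.
have D0 : (0 < D)%N by rewrite /D muln_gt0 !den_pos.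
have M10 : (0 < n * D)%N by rewrite muln_gt0 n0.
have L0 : (0 < n * D * M)%N by rewrite muln_gt0 M10.
rewrite -(modq_congr n0 (amul_indep vx vy (valid_bnd vx) (valid_bnd vy) n0 M10 L0 _ _)); last first.
- by rewrite mulnA.
- exact: dvdn_mulr.
apply: modq_congr => //.
apply: amul_indep bx bY n0 M0 L0 _ nM => //.
exact: dvdn_mull.
Qed.

Lemma modq0 r : modq r 0 = 0. Proof. by rewrite /modq eqxx. Qed.

Lemma modq_modq r n m : (0 < n)%N -> (0 < m)%N -> (n %| m)%N ->
  cg n (modq r m) (modq r n).
Proof.
move=> n0 m0 nm; apply: (@cg_trans n _ r); last exact: modq_cg.
apply: cg_sym; exact: (cg_dvd m0 nm (modq_cg m0 r)).
Qed.

Lemma bnd_modq e r k : (0 < e)%N -> e%:R * r \is a Num.int -> e%:R * modq r k \is a Num.int.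
Proof.
move=> e0 h; case: k => [|k]; first by rewrite modq0 mulr0.
have [j jI ->] := @cg_intE k.+1 isT _ _ (cg_sym (modq_cg (isT : (0 < k.+1)%N) r)).
by rewrite mulrDr rpredD // !rpredM ?rpred_nat.
Qed.

Lemma valid_ratA q : validA (ratA q).
Proof.
split; first exact: modq0.
split; first by move=> n n0; apply: modq_range.
by move=> n m n0 m0 nm; apply/isIntE; apply: modq_modq.
Qed.

Lemma valid_add x y : validA x -> validA y -> validA (aadd x y).
Proof.
move=> vx vy; split; first exact: modq0.
split; first by move=> n n0; apply: modq_range.
move=> n m n0 m0 nm; apply/isIntE; rewrite /aadd.
apply: (@cg_trans n _ (x m + y m)).
  apply: cg_sym; exact: (cg_dvd m0 nm (modq_cg m0 _)).
apply: (@cg_trans n _ (x n + y n)); last exact: modq_cg.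
by apply: cg_add; apply: valid_cg.
Qed.

Lemma valid_neg x : validA x -> validA (aneg x).
Proof.
move=> vx; split; first exact: modq0.
split; first by move=> n n0; apply: modq_range.
move=> n m n0 m0 nm; apply/isIntE; rewrite /aneg.
apply: (@cg_trans n _ (- x m)).
  apply: cg_sym; exact: (cg_dvd m0 nm (modq_cg m0 _)).
apply: (@cg_trans n _ (- x n)); last exact: modq_cg.
by apply: cg_opp; apply: valid_cg.
Qed.

Lemma valid_mul x y : validA x -> validA y -> validA (amul x y).
Proof.
move=> vx vy; split; first exact: modq0.
split; first by move=> n n0; apply: modq_range.
move=> n m n0 m0 nm; apply/isIntE.
have [ex0 _] := valid_bnd vx; have [ey0 _] := valid_bnd vy.
set ex := absz _ in ex0; set ey := absz _ in ey0.
have L0 : (0 < m * ex * ey)%N by rewrite !muln_gt0 m0 ex0 ey0.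
rewrite (amul_gen vx vy (valid_bnd vx) (valid_bnd vy) m0 L0) //.
rewrite (amul_gen vx vy (valid_bnd vx) (valid_bnd vy) n0 L0) //; last first.
  by rewrite !dvdn_mul.
exact: modq_modq.
Qed.

Lemma bnd_ratA q : bnd (absz (denq q)) (ratA q).
Proof. split; first exact: den_pos. move=> k; apply: bnd_modq; [exact: den_pos|exact: den_bound]. Qed.

Lemma bnd_add x y ex ey : bnd ex x -> bnd ey y -> bnd (ex * ey) (aadd x y).
Proof.
move=> [e0 hx] [f0 hy]; split; first by rewrite muln_gt0 e0.
move=> k; apply: bnd_modq; first by rewrite muln_gt0 e0.
rewrite natrM mulrDr rpredD //.
  by rewrite mulrAC rpredM ?rpred_nat.
by rewrite -mulrA rpredM ?rpred_nat.
Qed.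

Lemma bnd_neg x ex : bnd ex x -> bnd ex (aneg x).
Proof.
move=> [e0 hx]; split => // k; apply: bnd_modq => //.
by rewrite mulrN rpredN.
Qed.

Lemma bnd_mul x y ex ey : validA x -> validA y -> bnd ex x -> bnd ey y -> bnd (ex * ey) (amul x y).
Proof.
move=> vx vy [e0 hx] [f0 hy]; split; first by rewrite muln_gt0 e0.
move=> k; rewrite /amul; apply: bnd_modq; first by rewrite muln_gt0 e0.
rewrite natrM mulrACA rpredM //.
Qed.

Lemma cg_modqL n r : (0 < n)%N -> cg n (modq r n) r.
Proof. by move=> n0; apply: cg_sym; apply: modq_cg. Qed.

Lemma aaddC x y : aadd x y = aadd y x.
Proof. by apply: functional_extensionality => n; rewrite /aadd addrC. Qed.

Lemma aaddA x y z : validA x -> validA y -> validA z ->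
  aadd x (aadd y z) = aadd (aadd x y) z.
Proof.
move=> vx vy vz; apply: functional_extensionality => n; rewrite /aadd.
case: n => [|n]; first by rewrite !modq0.
have n0 : (0 < n.+1)%N by [].
rewrite [RHS](modq_congr n0 (cg_add (cg_modqL _ n0) (cg_refl _ _))).
rewrite [LHS](modq_congr n0 (cg_add (cg_refl _ _) (cg_modqL _ n0))).
by rewrite addrA.
Qed.

Lemma valid_range x n : validA x -> (0 < n)%N -> 0 <= x n /\ x n < n%:R.
Proof. by move=> [_ [h _]]; apply: h. Qed.

Lemma aadd0 x : validA x -> aadd azero x = x.
Proof.
move=> vx; apply: functional_extensionality => n; rewrite /aadd /azero /ratA.
case: n => [|n]; first by rewrite !modq0; case: vx.
have n0 : (0 < n.+1)%N by [].
have [h1 h2] := valid_range vx n0.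
by rewrite (modq_id n0 (lexx 0)) ?ltr0n // add0r modq_id.
Qed.

Lemma aaddN x : validA x -> aadd x (aneg x) = azero.
Proof.
move=> vx; apply: functional_extensionality => n; rewrite /aadd /aneg /azero /ratA.
case: n => [|n]; first by rewrite !modq0.
have n0 : (0 < n.+1)%N by [].
rewrite (modq_congr n0 (cg_add (cg_refl _ _) (cg_modqL _ n0))).
by rewrite subrr.
Qed.



Lemma amulC x y : validA x -> validA y -> amul x y = amul y x.
Proof.
move=> vx vy; apply: functional_extensionality => n.
case: n => [|n]; first by rewrite /amul !modq0.
have n0 : (0 < n.+1)%N by [].
move: (valid_bnd vx) (valid_bnd vy).
move: (absz (denq (x 1%N))) (absz (denq (y 1%N))) => ex ey bx bY.
have [ex0 _] := bx; have [ey0 _] := bY.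
have M0 : (0 < n.+1 * ex * ey)%N by rewrite !muln_gt0 ex0 ey0.
rewrite (amul_gen vx vy bx bY n0 M0 (dvdnn _)).
rewrite (amul_gen vy vx bY bx n0 M0); last by rewrite mulnAC.
by rewrite mulrC.
Qed.

Lemma dvdW (a b q : nat) : (a = q * b)%N -> (b %| a)%N.
Proof. by move=> ->; apply: dvdn_mull. Qed.

Lemma amulA_aux x y z ex ey ez n : validA x -> validA y -> validA z ->
  bnd ex x -> bnd ey y -> bnd ez z -> (0 < n)%N ->
  amul x (amul y z) n =
  modq (x (n * (ex * ey * ez) * (ex * ey * ez))%N *
        (y (n * (ex * ey * ez) * (ex * ey * ez))%N *
         z (n * (ex * ey * ez) * (ex * ey * ez))%N)) n.
Proof.
move=> vx vy vz bx bY bz n0.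
have [ex0 hx] := bx; have [ey0 hy] := bY; have [ez0 hz] := bz.
set E := (ex * ey * ez)%N; set M := (n * E)%N; set L := (M * E)%N.
have E0 : (0 < E)%N by rewrite !muln_gt0 ex0 ey0.
have M0 : (0 < M)%N by rewrite muln_gt0 n0.
have L0 : (0 < L)%N by rewrite muln_gt0 M0.
have vyz := valid_mul vy vz; have byz := bnd_mul vy vz bY bz.
rewrite (amul_gen vx vyz bx byz n0 M0); last by apply: (@dvdW _ _ 1); rewrite /M /E; ring.
rewrite (amul_gen vy vz bY bz M0 L0); last by apply: (@dvdW _ _ ex); rewrite /L /E; ring.
apply: modq_congr => //.
apply: (@cg_trans n _ (x M * (y L * z L))).
  rewrite ![x M * _]mulrC.
  apply: (@cg_mul n M _ _ _ ex) => //.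
    by apply: (@dvdW _ _ (ey * ez)); rewrite /M /E; ring.
  exact: cg_modqL.
apply: (@cg_mul n M _ _ _ (ey * ez)) => //.
- by apply: (@dvdW _ _ ex); rewrite /M /E; ring.
- by have := rpredM (hy L) (hz L); rewrite natrM mulrACA.
apply: (@cg_sym M); apply: valid_cg => //.
by apply: (@dvdW _ _ E); rewrite /L mulnC.
Qed.

Lemma amulA x y z : validA x -> validA y -> validA z ->
  amul x (amul y z) = amul (amul x y) z.
Proof.
move=> vx vy vz; apply: functional_extensionality => n.
case: n => [|n]; first by rewrite /amul !modq0.
have n0 : (0 < n.+1)%N by [].
move: (valid_bnd vx) (valid_bnd vy) (valid_bnd vz).
move: (absz (denq (x 1%N))) (absz (denq (y 1%N))) (absz (denq (z 1%N))) => ex ey ez bx bY bz.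
rewrite (amulA_aux vx vy vz bx bY bz n0).
rewrite (amulC (valid_mul vx vy) vz) (amulC vx vy).
rewrite (amulA_aux vz vy vx bz bY bx n0).
have -> : (ez * ey * ex = ex * ey * ez)%N by ring.
by congr (modq _ _); ring.
Qed.

Lemma amulDr x y z : validA x -> validA y -> validA z ->
  amul x (aadd y z) = aadd (amul x y) (amul x z).
Proof.
move=> vx vy vz; apply: functional_extensionality => n.
case: n => [|n]; first by rewrite /amul /aadd !modq0.
have n0 : (0 < n.+1)%N by [].
move: (valid_bnd vx) (valid_bnd vy) (valid_bnd vz).
move: (absz (denq (x 1%N))) (absz (denq (y 1%N))) (absz (denq (z 1%N))) => ex ey ez bx bY bz.
have [ex0 hx] := bx; have [ey0 hy] := bY; have [ez0 hz] := bz.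
set M := (n.+1 * ex * (ey * ez))%N.
have M0 : (0 < M)%N by rewrite !muln_gt0 ex0 ey0 ez0.
rewrite (amul_gen vx (valid_add vy vz) bx (bnd_add bY bz) n0 M0 (dvdnn _)).
rewrite /aadd.
rewrite (amul_gen vx vy bx bY n0 M0); last by apply: (@dvdW _ _ ez); rewrite /M; ring.
rewrite (amul_gen vx vz bx bz n0 M0); last by apply: (@dvdW _ _ ey); rewrite /M; ring.
apply: modq_congr => //.
apply: (@cg_trans _ _ (x M * (y M + z M))).
  rewrite ![x M * _]mulrC.
  apply: (@cg_mul n.+1 M _ _ _ ex) => //.
    by apply: (@dvdW _ _ (ey * ez)); rewrite /M; ring.
  exact: cg_modqL.
rewrite mulrDr.
apply: cg_sym; apply: cg_add; exact: cg_modqL.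
Qed.

Lemma amul1 x : validA x -> amul aone x = x.
Proof.
move=> vx; apply: functional_extensionality => n.
case: n => [|n]; first by rewrite /amul modq0; case: vx.
have n0 : (0 < n.+1)%N by [].
move: (valid_bnd vx); move: (absz (denq (x 1%N))) => ex bx; have [ex0 hx] := bx.
have b1 := bnd_ratA 1.
move: (absz (denq 1)) b1 => e1 b1; have [e10 _] := b1.
set M := (2 * (n.+1 * e1 * ex))%N.
have M0 : (0 < M)%N by rewrite !muln_gt0 e10 ex0.
rewrite (amul_gen (valid_ratA 1) vx b1 bx n0 M0); last by apply: (@dvdW _ _ 2).
have -> : ratA 1 M = 1.
  rewrite /aone /ratA modq_id //.
  rewrite ltr1n; move: M0; rewrite /M; lia.
rewrite mul1r; apply: esym; apply: valid_modq => //.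
by apply: (@dvdW _ _ (2 * e1 * ex)); rewrite /M; ring.
Qed.

Lemma ratA_add p q : aadd (ratA p) (ratA q) = ratA (p + q).
Proof.
apply: functional_extensionality => n; rewrite /aadd /ratA.
case: n => [|n]; first by rewrite !modq0.
by apply: modq_congr => //; apply: cg_add; apply: cg_modqL.
Qed.

Lemma ratA_mul p q : amul (ratA p) (ratA q) = ratA (p * q).
Proof.
apply: functional_extensionality => n.
case: n => [|n]; first by rewrite /amul /ratA !modq0.
have n0 : (0 < n.+1)%N by [].
have bp := bnd_ratA p; have bq := bnd_ratA q; have dp := den_bound p.
move: (absz (denq p)) (absz (denq q)) bp bq dp => ep eq bp bq dp.
have [ep0 hp] := bp; have [eq0 hq] := bq.
set M := (n.+1 * ep * eq)%N.
have M0 : (0 < M)%N by rewrite !muln_gt0 ep0 eq0.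
rewrite (amul_gen (valid_ratA p) (valid_ratA q) bp bq n0 M0 (dvdnn _)).
rewrite {3}/ratA; apply: modq_congr => //.
apply: (@cg_trans _ _ (p * ratA q M)).
  apply: (@cg_mul n.+1 M _ _ _ eq) => //; first by apply: (@dvdW _ _ ep); rewrite /M; ring.
  exact: cg_modqL.
rewrite ![p * _]mulrC.
apply: (@cg_mul n.+1 M _ _ _ ep) => //.
- by apply: (@dvdW _ _ eq); rewrite /M; ring.
exact: cg_modqL.
Qed.


Record VA := MkVA { va : rawA ; vaP : validA va }.

Lemma VA_eq (a b : VA) : va a = va b -> a = b.
Proof.
case: a => a pa; case: b => b pb /= e; subst b.
by rewrite (proof_irrelevance _ pa pb).
Qed.

Definition vrat q := MkVA (valid_ratA q).
Definition v0 := vrat 0.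
Definition v1 := vrat 1.
Definition vadd (a b : VA) := MkVA (valid_add (vaP a) (vaP b)).
Definition vmul (a b : VA) := MkVA (valid_mul (vaP a) (vaP b)).
Definition vopp (a : VA) := MkVA (valid_neg (vaP a)).
Definition vsub a b := vadd a (vopp b).

Lemma VA_rt : ring_theory v0 v1 vadd vmul vsub vopp (@eq VA).
Proof.
constructor.
- move=> x; apply: VA_eq; exact: aadd0 (vaP x).
- move=> x y; apply: VA_eq; exact: aaddC.
- move=> x y z; apply: VA_eq; exact: aaddA (vaP x) (vaP y) (vaP z).
- move=> x; apply: VA_eq; exact: amul1 (vaP x).
- move=> x y; apply: VA_eq; exact: amulC (vaP x) (vaP y).
- move=> x y z; apply: VA_eq; exact: amulA (vaP x) (vaP y) (vaP z).
- move=> x y z; apply: VA_eq => /=.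
  rewrite (amulC (valid_add (vaP x) (vaP y)) (vaP z)) (amulDr (vaP z) (vaP x) (vaP y)).
  by rewrite (amulC (vaP z) (vaP x)) (amulC (vaP z) (vaP y)).
- by [].
- move=> x; apply: VA_eq; exact: aaddN (vaP x).
Qed.

Add Ring VAring : VA_rt.


Record VM := MkVM { m11 : VA; m12 : VA; m21 : VA; m22 : VA }.

Definition vmm (A B : VM) : VM :=
  MkVM (vadd (vmul (m11 A) (m11 B)) (vmul (m12 A) (m21 B)))
       (vadd (vmul (m11 A) (m12 B)) (vmul (m12 A) (m22 B)))
       (vadd (vmul (m21 A) (m11 B)) (vmul (m22 A) (m21 B)))
       (vadd (vmul (m21 A) (m12 B)) (vmul (m22 A) (m22 B))).

Definition vI := MkVM v1 v0 v0 v1.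
Definition vsc (t : VA) := MkVM t v0 v0 t.

Definition toM (A : VM) : M2 := mkM2 (va (m11 A)) (va (m12 A)) (va (m21 A)) (va (m22 A)).

Lemma toM_mul A B : toM (vmm A B) = mmul (toM A) (toM B).
Proof. by []. Qed.

Lemma toM_inj A B : toM A = toM B -> A = B.
Proof.
case: A => a b c d; case: B => a' b' c' d' [] /VA_eq -> /VA_eq -> /VA_eq -> /VA_eq -> //.
Qed.

Lemma toM_I : toM vI = mone. Proof. by []. Qed.

Lemma liftM g : entries_in validA g -> exists A, toM A = g.
Proof.
case: g => a b c d [pa [pb [pc pd]]] /=.
by exists (MkVM (MkVA pa) (MkVA pb) (MkVA pc) (MkVA pd)).
Qed.

Lemma toM_valid A : entries_in validA (toM A).
Proof. by case: A => [[a pa] [b pb] [c pc] [d pd]]. Qed.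

Lemma vmmA A B C : vmm A (vmm B C) = vmm (vmm A B) C.
Proof. case: A B C => [a b c d] [a' b' c' d'] [x y z w]; rewrite /vmm /=; f_equal; sring. Qed.

Lemma vmm1l A : vmm vI A = A.
Proof. case: A => [a b c d]; rewrite /vmm /=; f_equal; sring. Qed.

Lemma vmm1r A : vmm A vI = A.
Proof. case: A => [a b c d]; rewrite /vmm /=; f_equal; sring. Qed.

Lemma vsc_comm t A : vmm (vsc t) A = vmm A (vsc t).
Proof. case: A => [a b c d]; rewrite /vmm /=; f_equal; sring. Qed.

Lemma vsc_mul s t : vmm (vsc s) (vsc t) = vsc (vmul s t).
Proof. rewrite /vmm /vsc /=; f_equal; sring. Qed.

Lemma vsc1 : vsc v1 = vI. Proof. by []. Qed.

Definition isZ (a : VA) := va a 1%N = 0.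

Lemma int_of_cg1 r : cg 1 r 0 -> r \is a Num.int.
Proof. by rewrite /cg subr0 divr1. Qed.

Lemma isZ_int (a : VA) k : isZ a -> va a k \is a Num.int.
Proof.
move=> h; case: k => [|k]; first by have [-> _] := vaP a.
have := valid_cg (vaP a) (isT : (0 < 1)%N) (isT : (0 < k.+1)%N) (dvd1n _).
by rewrite /isZ in h; rewrite h; apply: int_of_cg1.
Qed.

Lemma modq1_int r : r \is a Num.int -> modq r 1 = 0.
Proof.
move=> h; apply: (@modq_eq 1 isT) => //.
by rewrite /cg subr0 divr1.
Qed.

Lemma isZ_add a b : isZ a -> isZ b -> isZ (vadd a b).
Proof. by rewrite /isZ /= /aadd => -> ->; rewrite addr0 modq1_int. Qed.

Lemma isZ_mul a b : isZ a -> isZ b -> isZ (vmul a b).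
Proof.
move=> ha hb; rewrite /isZ /= /amul; apply: modq1_int.
by apply: rpredM; apply: isZ_int.
Qed.

Lemma isZ_vrat q : isZ (vrat q) -> q \is a Num.int.
Proof.
rewrite /isZ /= /ratA => h.
have := modq_cg (isT : (0 < 1)%N) q; rewrite h.
exact: int_of_cg1.
Qed.

Lemma isZ_vrat_int q : q \is a Num.int -> isZ (vrat q).
Proof. by move=> h; rewrite /isZ /= /ratA modq1_int. Qed.

Lemma vrat_mul p q : vmul (vrat p) (vrat q) = vrat (p * q).
Proof. apply: VA_eq; exact: ratA_mul. Qed.

Lemma vrat_add p q : vadd (vrat p) (vrat q) = vrat (p + q).
Proof. apply: VA_eq; exact: ratA_add. Qed.

Definition isZM (A : VM) := [/\ isZ (m11 A), isZ (m12 A), isZ (m21 A) & isZ (m22 A)].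

Lemma isZM_mul A B : isZM A -> isZM B -> isZM (vmm A B).
Proof.
case: A B => [a b c d] [a' b' c' d'] [/= ha hb hc hd] [/= ha' hb' hc' hd'].
by split; apply: isZ_add; apply: isZ_mul.
Qed.

Lemma inZhat_isZ x : inZhat x -> exists a : VA, va a = x /\ isZ a.
Proof. by case=> vx h1; exists (MkVA vx). Qed.

Lemma inK_lift k : inK k -> exists K KH, [/\ toM K = k, isZM K, isZM KH,
  vmm K KH = vI & vmm KH K = vI].
Proof.
case: k => a b c d; rewrite /inK /entries_in /= => -[[ha [hb [hc hd]]] [h [[ha' [hb' [hc' hd']]] [e1 e2]]]].
case: (inZhat_isZ ha) => [A [ea0 zA]]; case: (inZhat_isZ hb) => [B [eb0 zB]].
case: (inZhat_isZ hc) => [C [ec0 zC]]; case: (inZhat_isZ hd) => [D [ed0 zD]].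
subst a b c d.
case: h ha' hb' hc' hd' e1 e2 => a' b' c' d' /= ha' hb' hc' hd' e1 e2.
case: (inZhat_isZ ha') => [A' [ea zA']]; case: (inZhat_isZ hb') => [B' [eb zB']].
case: (inZhat_isZ hc') => [C' [ec zC']]; case: (inZhat_isZ hd') => [D' [ed zD']].
subst a' b' c' d'.
exists (MkVM A B C D), (MkVM A' B' C' D'); split => //.
- by apply: toM_inj; rewrite toM_mul; exact: e1.
- by apply: toM_inj; rewrite toM_mul; exact: e2.
Qed.

Lemma inG_lift g : inG g -> exists G GI, [/\ toM G = g, vmm G GI = vI & vmm GI G = vI].
Proof.
case=> vg [h [vh [e1 e2]]].
case: (liftM vg) => G eG; case: (liftM vh) => GI eGI; subst g h.
by exists G, GI; split => //; apply: toM_inj; rewrite toM_mul.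
Qed.

Lemma inG_of G GI : vmm G GI = vI -> vmm GI G = vI -> inG (toM G).
Proof.
move=> e1 e2; split; first exact: toM_valid.
by exists (toM GI); split; [exact: toM_valid|rewrite -!toM_mul e1 e2].
Qed.

Lemma inZ_lift z : inZ z -> exists T S, z = toM (vsc T) /\ vmul T S = v1.
Proof.
case=> t [[vt [w [vw [e1 _]]]] ->].
by exists (MkVA vt), (MkVA vw); split => //; apply: VA_eq.
Qed.

Definition AY (y : rat) := MkVM (vrat y) v0 v0 v1.

Lemma a_AY y : a_ y = toM (AY y). Proof. by []. Qed.

Lemma AY_inv y : y != 0 -> vmm (AY y) (AY y^-1) = vI.
Proof.
move=> y0; have e : vmul (vrat y) (vrat y^-1) = v1 by rewrite vrat_mul mulfV.
rewrite /vmm /AY /= e /vI; f_equal; sring.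
Qed.

Lemma vmm_sc2 s t A B : vmm (vmm (vsc s) A) (vmm (vsc t) B) = vmm (vsc (vmul s t)) (vmm A B).
Proof. case: A B => [a b c d] [a' b' c' d']; rewrite /vmm /=; f_equal; sring. Qed.

Lemma vmm_cancel A B C D : vmm B C = vI -> vmm (vmm A B) (vmm C D) = vmm A D.
Proof. by move=> e; rewrite vmmA -(vmmA A B C) e vmm1r. Qed.

Lemma isZ_opp a : isZ a -> isZ (vopp a).
Proof. by rewrite /isZ /= /aneg => ->; rewrite oppr0 modq1_int. Qed.

Lemma isZ_v0 : isZ v0. Proof. exact: isZ_vrat_int. Qed.
Lemma isZ_v1 : isZ v1. Proof. exact: isZ_vrat_int. Qed.
Lemma isZ_N (N : nat) : isZ (vrat N%:R). Proof. by apply: isZ_vrat_int; apply: rpred_nat. Qed.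

Lemma vrat_NN (N : nat) : (0 < N)%N -> va (vrat N%:R) N = 0.
Proof.
move=> N0; rewrite /= /ratA; apply: modq_eq => //; first by rewrite ltr0n.
rewrite /cg subr0 divff ?rpred1 //.
by rewrite pnatr_eq0 -lt0n.
Qed.

Lemma va_v0 (N : nat) : (0 < N)%N -> va v0 N = 0.
Proof. by move=> N0; rewrite /= /ratA modq_id // ltr0n. Qed.

Lemma inKN_of N A B : (0 < N)%N -> isZM A -> isZM B -> vmm A B = vI -> vmm B A = vI ->
  va (vsub (m11 A) v1) N = 0 -> va (m12 A) N = 0 -> va (m21 A) N = 0 ->
  va (vsub (m22 A) v1) N = 0 -> inKN N (toM A).
Proof.
move=> N0 [za zb zc zd] [za' zb' zc' zd'] e1 e2 h1 h2 h3 h4.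
have hZ : forall a, isZ a -> inZhat (va a) by move=> a h; split; [exact: vaP|exact: h].
split.
  split; first by split; [|split; [|split]]; apply: hZ.
  exists (toM B); split; first by split; [|split; [|split]]; apply: hZ.
  by rewrite -!toM_mul e1 e2.
split; first by split; [exact: (vaP (vsub (m11 A) v1))|exact: h1].
split; first by split; [exact: (vaP (m12 A))|exact: h2].
split; first by split; [exact: (vaP (m21 A))|exact: h3].
by split; [exact: (vaP (vsub (m22 A) v1))|exact: h4].
Qed.

Lemma inKN_I N : (0 < N)%N -> inKN N mone.
Proof.
move=> N0; rewrite -toM_I; apply: (@inKN_of N vI vI).
- exact: N0.
- by split; [exact: isZ_v1|exact: isZ_v0|exact: isZ_v0|exact: isZ_v1].
- by split; [exact: isZ_v1|exact: isZ_v0|exact: isZ_v0|exact: isZ_v1].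
- exact: vmm1l.
- exact: vmm1l.
- have -> : vsub (m11 vI) v1 = v0 by rewrite /=; sring.
  exact: va_v0.
- exact: va_v0.
- exact: va_v0.
- have -> : vsub (m22 vI) v1 = v0 by rewrite /=; sring.
  exact: va_v0.
Qed.

Lemma core (f : fnG) (N : nat) (y : rat) g U Ui :
  0 < y -> (0 < N)%N -> bi_invariant (inKN N) f ->
  (forall g, inG g -> f g <> 0 ->
    exists z k, inZ z /\ inK k /\ g = mmul (mmul (mmul (a_ y^-1) z) k) (a_ y)) ->
  inG g -> f g <> 0 -> inKN N (toM U) -> vmm U Ui = vI -> vmm Ui U = vI ->
  exists s m w, [/\ isZM m, isZM w, vmm w m = vI &
     vmm (vsc s) m = vmm (vmm (AY y) U) (AY y^-1)].
Proof.
move=> y0 N0 Hbi Hsupp gG fg UK eU1 eU2.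
have y0' : y != 0 by rewrite gt_eqF.
case: (inG_lift gG) => G [GI [eG eG1 eG2]]; subst g.
have fGU : f (toM (vmm G U)) <> 0.
  have e : mmul (toM G) (toM U) = mmul (mmul mone (toM G)) (toM U).
    by rewrite -toM_I -!toM_mul vmm1l.
  rewrite toM_mul e (Hbi mone (toM G) (toM U)) //; exact: inKN_I.
have GUG : inG (toM (vmm G U)).
  apply: (@inG_of _ (vmm Ui GI)); first by rewrite vmm_cancel.
  by rewrite vmm_cancel.
case: (Hsupp _ gG fg) => z [k [zZ [kK ek]]].
case: (Hsupp _ GUG fGU) => z' [k' [zZ' [kK' ek']]].
case: (inZ_lift zZ) => T [S [ez eTS]]; case: (inZ_lift zZ') => T' [S' [ez' _]].
case: (inK_lift kK) => K [KH [eK zK zKH eKKH eKHK]].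
case: (inK_lift kK') => K' [KH' [eK' zK' zKH' eKKH' eKHK']].
subst z z' k k'.
rewrite !a_AY -!toM_mul in ek ek'.
move/toM_inj: ek => ek; move/toM_inj: ek' => ek'.
set Y := AY y in ek ek' *; set Yi := AY y^-1 in ek ek' *.
have eYYi : vmm Y Yi = vI by exact: AY_inv.
have eYiY : vmm Yi Y = vI by rewrite /Y /Yi -{2}(invrK y) AY_inv // invr_eq0.
exists (vmul S T'), (vmm KH K'), (vmm KH' K); split.
- exact: isZM_mul.
- exact: isZM_mul.
- by rewrite vmm_cancel.
have sA : vmm (vmm (vmm (vmm (vsc T) K) Y) U) Yi = vmm (vsc T') K'.
  have := congr1 (fun X => vmm (vmm Y X) Yi) ek'.
  rewrite /= ek !vmmA eYYi vmm1l.
  by rewrite vmm1l -(vmmA _ Y Yi) eYYi vmm1r.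
have sB := congr1 (vmm (vmm (vsc S) KH)) sA.
rewrite vmm_sc2 in sB; rewrite -sB.
have -> : vmm (vmm (vmm (vmm (vsc T) K) Y) U) Yi = vmm (vmm (vsc T) K) (vmm (vmm Y U) Yi).
  by rewrite !vmmA.
rewrite vmmA.
have -> : vmm (vmm (vsc S) KH) (vmm (vsc T) K) = vI.
  rewrite vmm_sc2.
  have -> : vmul S T = v1 by rewrite -eTS; sring.
  by rewrite vsc1 vmm1l.
by rewrite vmm1l.
Qed.


Lemma int_nat_of (r : rat) : r \is a Num.int -> 0 <= r -> exists n : nat, r = n%:R.
Proof.
move=> h1 h2; have : r \is a Num.nat by rewrite natrEint h1 h2.
by case/natrP => n ->; exists n.
Qed.

Theorem lemma3p5 (f : fnG) (N : nat) (y : rat) :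
  in_Hfin f -> not_identically_zero f -> geometric_assumptions f ->
  level f N -> controls_support f y ->
  (exists n : nat, y * N%:R = n%:R) /\ (exists m : nat, N%:R / y = m%:R).
Proof.
move=> _ [g [gG fg]] _ [N0 [Hbi _]] [y0 Hsupp].
have y0' : y != 0 by rewrite gt_eqF.
have eYY : vmul (vrat y) (vrat y^-1) = v1 by rewrite vrat_mul mulfV.
set n := vrat N%:R.
split.
- pose U := MkVM v1 n v0 v1; pose Ui := MkVM v1 (vopp n) v0 v1.
  have eU1 : vmm U Ui = vI by rewrite /vmm /vI /=; f_equal; sring.
  have eU2 : vmm Ui U = vI by rewrite /vmm /vI /=; f_equal; sring.
  have UK : inKN N (toM U).
    apply: (@inKN_of N U Ui) => //.
    + by split; [exact: isZ_v1|exact: isZ_N|exact: isZ_v0|exact: isZ_v1].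
    + by split; [exact: isZ_v1|apply: isZ_opp; exact: isZ_N|exact: isZ_v0|exact: isZ_v1].
    + have -> : vsub (m11 U) v1 = v0 by rewrite /=; sring.
      exact: va_v0.
    + exact: vrat_NN.
    + exact: va_v0.
    + have -> : vsub (m22 U) v1 = v0 by rewrite /=; sring.
      exact: va_v0.
  case: (core y0 N0 Hbi Hsupp gG fg UK eU1 eU2) => s [m [w [zm zw ewm esm]]].
  have h11 : vmul s (m11 m) = v1.
    transitivity (m11 (vmm (vsc s) m)); first by rewrite /=; sring.
    rewrite esm /=; sringW eYY.
  have h21 : vmul s (m21 m) = v0.
    transitivity (m21 (vmm (vsc s) m)); first by rewrite /=; sring.
    rewrite esm /=; sring.
  have h12 : vmul s (m12 m) = vmul (vrat y) n.
    transitivity (m12 (vmm (vsc s) m)); first by rewrite /=; sring.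
    rewrite esm /=; sring.
  have hw : vadd (vmul (m11 w) (m11 m)) (vmul (m12 w) (m21 m)) = v1.
    by have := congr1 m11 ewm.
  have e : vmul (vrat y) n = vmul (m12 m) (m11 w).
    rewrite -h12.
    transitivity (vmul (vmul s (m12 m)) (vadd (vmul (m11 w) (m11 m)) (vmul (m12 w) (m21 m)))).
      by rewrite hw; sring.
    transitivity (vmul (m12 m) (vadd (vmul (m11 w) (vmul s (m11 m))) (vmul (m12 w) (vmul s (m21 m))))).
      by sring.
    by rewrite h11 h21; sring.
  have : isZ (vrat (y * N%:R)).
    rewrite -vrat_mul -/n e; apply: isZ_mul.
    + by case: zm.
    + by case: zw.
  move/isZ_vrat => hI; apply: int_nat_of => //.
  by rewrite mulr_ge0 // ?ltW // ler0n.
- pose U := MkVM v1 v0 n v1; pose Ui := MkVM v1 v0 (vopp n) v1.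
  have eU1 : vmm U Ui = vI by rewrite /vmm /vI /=; f_equal; sring.
  have eU2 : vmm Ui U = vI by rewrite /vmm /vI /=; f_equal; sring.
  have UK : inKN N (toM U).
    apply: (@inKN_of N U Ui) => //.
    + by split; [exact: isZ_v1|exact: isZ_v0|exact: isZ_N|exact: isZ_v1].
    + by split; [exact: isZ_v1|exact: isZ_v0|apply: isZ_opp; exact: isZ_N|exact: isZ_v1].
    + have -> : vsub (m11 U) v1 = v0 by rewrite /=; sring.
      exact: va_v0.
    + exact: va_v0.
    + exact: vrat_NN.
    + have -> : vsub (m22 U) v1 = v0 by rewrite /=; sring.
      exact: va_v0.
  case: (core y0 N0 Hbi Hsupp gG fg UK eU1 eU2) => s [m [w [zm zw ewm esm]]].
  have h22 : vmul s (m22 m) = v1.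
    transitivity (m22 (vmm (vsc s) m)); first by rewrite /=; sring.
    rewrite esm /=; sring.
  have h12 : vmul s (m12 m) = v0.
    transitivity (m12 (vmm (vsc s) m)); first by rewrite /=; sring.
    rewrite esm /=; sring.
  have h21 : vmul s (m21 m) = vmul n (vrat y^-1).
    transitivity (m21 (vmm (vsc s) m)); first by rewrite /=; sring.
    rewrite esm /=; sring.
  have hw : vadd (vmul (m21 w) (m12 m)) (vmul (m22 w) (m22 m)) = v1.
    by have := congr1 m22 ewm.
  have e : vmul n (vrat y^-1) = vmul (m21 m) (m22 w).
    rewrite -h21.
    transitivity (vmul (vmul s (m21 m)) (vadd (vmul (m21 w) (m12 m)) (vmul (m22 w) (m22 m)))).
      by rewrite hw; sring.
    transitivity (vmul (m21 m) (vadd (vmul (m21 w) (vmul s (m12 m))) (vmul (m22 w) (vmul s (m22 m))))).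
      by sring.
    by rewrite h12 h22; sring.
  have : isZ (vrat (N%:R / y)).
    rewrite -vrat_mul -/n e; apply: isZ_mul.
    + by case: zm.
    + by case: zw.
  move/isZ_vrat => hI; apply: int_nat_of => //.
  by rewrite divr_ge0 // ?ltW // ler0n.
Qed.
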